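(* Let $a>0$, $b,c\ge 0$, and consider the system $$\dot x=x(1-y+cx-axz),\qquad \dot y=y(-1+x),\qquad \dot z=z(-b+ax^2).$$ Let $f$ be an irreducible Darboux polynomial of degree greater than one with cofactor $K=\alpha_2y$, $\alpha_2\in\mathbb{C}$. Then $\alpha_2=0$.
   Context: A Darboux polynomial is $f\in\mathbb{C}[x,y,z]$ with $x(1-y+cx-axz)f_x+y(-1+x)f_y+z(-b+ax^2)f_z=Kf$ for a polynomial cofactor $K$ of degree at most two. *)

(* Defs.v *)
From HB Require Import structures.
From mathcomp Require Import all_boot all_order all_algebra.
From mathcomp Require Import reals.
From mathcomp Require Import complex.
From mathcomp Require Import mpoly.

Set Implicit Arguments.
Unset Strict Implicit.
Unset Printing Implicit Defensive.

Import Order.TTheory GRing.Theory Num.Theory.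
Local Open Scope ring_scope.

Section Darboux.
Variable R : realType.

Definition cpoly3 := {mpoly R[i][3]}.

Definition vx : 'I_3 := @Ordinal 3 0 isT.
Definition vy : 'I_3 := @Ordinal 3 1 isT.
Definition vz : 'I_3 := @Ordinal 3 2 isT.

Definition rconst (r : R) : cpoly3 := (Complex r 0)%:MP.

(* total degree of a multivariate polynomial (msize p = 1 + degree) *)
Definition mtotdeg (p : cpoly3) : nat := (msize p).-1.

Definition vfield (a b c : R) (f : cpoly3) : cpoly3 :=
  let x := 'X_vx in let y := 'X_vy in let z := 'X_vz in
  x * (1 - y + rconst c * x - rconst a * x * z) * mderiv vx f
  + y * (-1 + x) * mderiv vy f
  + z * (- rconst b + rconst a * x ^+ 2) * mderiv vz f.

Definition darboux_cofactor (a b c : R) (f K : cpoly3) : Prop :=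
  (mtotdeg K <= 2)%N /\ vfield a b c f = K * f.

Definition irreducible_mpoly (f : cpoly3) : Prop :=
  f != 0 /\ f \isn't a GRing.unit /\
  forall g h : cpoly3, f = g * h -> g \is a GRing.unit \/ h \is a GRing.unit.

End Darboux.

(* Main.v *)
Require Import Defs.
From HB Require Import structures.
From mathcomp Require Import all_boot all_order all_algebra.
From mathcomp Require Import reals.
From mathcomp Require Import complex.
From mathcomp Require Import mpoly.
From mathcomp Require Import ring zify.
Import Order.TTheory GRing.Theory Num.Theory.
Local Open Scope ring_scope.

Section Helpers.
Variable (n : nat) (K : comNzRingType).
Implicit Types (p : {mpoly K[n]}) (m : 'X_{1..n}).

Lemma coefMXi p (i : 'I_n) m :
  (p * 'X_i)@_m = if m i == 0%N then 0 else p@_(m - U_(i))%MM.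
Proof.
case: eqP => Hm.
  apply/eqP; rewrite mcoeff_eq0; apply/negP => Hin.
  move: (perm_mem (msuppMX p U_(i)) m); rewrite Hin => /esym /mapP [m' _ Em].
  by move: Hm; rewrite Em mnmDE mnm1E eqxx.
have Hle : (U_(i) <= m)%MM.
  apply/mnm_lepP => j; rewrite mnm1E; case: eqP => [<-|_] //; lia.
by rewrite -{1}(submK Hle) addmC mcoeffMX.
Qed.

Lemma coefDX p (i : 'I_n) m : (mderiv i p * 'X_i)@_m = p@_m *+ m i.
Proof.
rewrite coefMXi; case: eqP => [->|Hm]; first by rewrite mulr0n.
have Hle : (U_(i) <= m)%MM.
  apply/mnm_lepP => j; rewrite mnm1E; case: eqP => [<-|_] //; lia.
rewrite mcoeff_mderiv submK // mnmBE mnm1E eqxx; congr (_ *+ _); lia.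
Qed.

End Helpers.

Theorem lemma4p4 (R : realType) (a b c : R) (alpha2 : R[i]) (f : cpoly3 R) :
  0 < a -> 0 <= b -> 0 <= c ->
  irreducible_mpoly f -> (1 < mtotdeg f)%N ->
  darboux_cofactor a b c f (alpha2%:MP * 'X_vy) ->
  alpha2 = 0.
Proof.
move=> _ _ _ [fn0 [_ firr]] fdeg [_ Hv].
apply/eqP; apply/negP => /negP anz.
pose Q := (1 - 'X_vy + rconst c * 'X_vx - rconst a * 'X_vx * 'X_vz) * mderiv vx f
   + 'X_vy * mderiv vy f + rconst a * 'X_vx * 'X_vz * mderiv vz f.
have HV : vfield a b c f = 'X_vx * Q - mderiv vy f * 'X_vy
   - rconst b * (mderiv vz f * 'X_vz).
  by rewrite /vfield /Q; ring.
have step : forall m' : 'X_{1..3}, m' vx = 0%N -> f@_(m' + U_(vy))%MM = 0 -> f@_m' = 0.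
  move=> m' Hm' H0.
  have := congr1 (mcoeff (m' + U_(vy))%MM) Hv.
  rewrite HV !mcoeffB mulrC coefMXi mnmDE mnm1E Hm' /= /rconst mcoeffCM.
  rewrite !coefDX H0 !mul0rn mulr0 !subr0.
  rewrite -mulrA [_ * f]mulrC mcoeffCM coefMXi mnmDE mnm1E eqxx addn1 /=.
  rewrite addmK.
  move=> /esym /eqP; rewrite mulf_eq0 (negbTE anz) /=; by move/eqP.
have ind : forall k (m' : 'X_{1..3}), m' vx = 0%N -> (msize f <= mdeg m' + k)%N -> f@_m' = 0.
  elim=> [|k IH] m' Hm' Hs.
    by apply: memN_msupp_eq0; apply: msize_mdeg_ge; rewrite addn0 in Hs.
  apply: step => //; apply: IH.
    by rewrite mnmDE mnm1E Hm'.
  by rewrite mdegD mdeg1 -addnA add1n.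
have supp : forall m : 'X_{1..3}, m \in msupp f -> (U_(vx) <= m)%MM.
  move=> m; rewrite mcoeff_msupp => Hm; apply/mnm_lepP => j.
  rewrite mnm1E; case: eqP => [<-|_] //.
  rewrite lt0n; apply/negP => /eqP H; apply: (negP Hm); apply/eqP.
  exact: (ind (msize f) m H (leq_addl _ _)).
pose h : cpoly3 R := \sum_(m <- msupp f) f@_m *: 'X_[(m - U_(vx))%MM].
have fE : f = h * 'X_vx.
  rewrite {1}(mpolyE f) /h mulr_suml big_seq [RHS]big_seq; apply: eq_bigr => m Hm.
  by rewrite -scalerAl -mpolyXD submK // supp.
have U0 : ((U_(vx))%MM == 0%MM :> 'X_{1..3}) = false by rewrite -mdeg_eq0 mdeg1.
case: (firr _ _ fE) => Hu.
  move: Hu => /andP [/eqP hC _].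
  have hn0 : h@_0 != 0.
    by apply: contraNneq fn0 => E; rewrite fE hC E mpolyC0 mul0r.
  move: fdeg; rewrite /mtotdeg fE hC mul_mpolyC msizeZ // msizeX mdeg1.
  by [].
move: Hu => /andP [/eqP hC _].
have := congr1 (mcoeff (U_(vx))%MM) hC.
rewrite mcoeffX mcoeffC eqxx U0 mulr0 => /eqP; by rewrite oner_eq0.
Qed.
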